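(* Suppose $\tau_L>\delta_L+1$ and $\delta_L>0$. Let $K=\left[-\frac{1}{\lambda_L^u},\hat m_{\rm max}\right]$ for some $\hat m_{\rm max}\in[0,1]$. The cone $\hat\Psi_K$ is invariant and expanding for $A_L^{-1}$ with expansion factor $\hat c_L=\min\left\{\frac{1}{\lambda_L^s},\frac{1+\lambda_L^s}{\sqrt2\,\lambda_L^s}\right\}$.
   Context: Let $A_L=\begin{bmatrix}\tau_L&1\\-\delta_L&0\end{bmatrix}$; under the hypotheses its eigenvalues are real with $0<\lambda_L^s<1<\lambda_L^u$. For an interval $K\subset\mathbb{R}$, $\hat\Psi_K=\left\{t\begin{bmatrix}\hat m\\1\end{bmatrix}: \hat m\in K,\ t\in\mathbb{R}\right\}$. For a real $2\times2$ matrix $A$, the cone $\hat\Psi_K$ is invariant for $A$ if $Av\in\hat\Psi_K$ for all $v\in\hat\Psi_K$, and expanding with expansion factor $c>1$ if $\|Av\|\ge c\|v\|$ for all $v\in\hat\Psi_K$ (Euclidean norm). *)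

(* Defs.v *)
From HB Require Import structures.
From mathcomp Require Import all_boot all_order all_algebra.
Set Implicit Arguments. Unset Strict Implicit. Unset Printing Implicit Defensive.
Import Order.TTheory GRing.Theory Num.Theory.
Local Open Scope ring_scope.

Section Defs.
Variable R : rcfType.

Definition AL (tau delta : R) : 'M[R]_2 :=
  \matrix_(i < 2, j < 2)
    if (i == 0 :> nat) then (if (j == 0 :> nat) then tau else 1)
    else (if (j == 0 :> nat) then - delta else 0).

(* eigenvalues of A_L (roots of x^2 - tau x + delta) *)
Definition lambda_s (tau delta : R) : R := (tau - Num.sqrt (tau ^+ 2 - 4 * delta)) / 2.
Definition lambda_u (tau delta : R) : R := (tau + Num.sqrt (tau ^+ 2 - 4 * delta)) / 2.

Definition vec2 (a b : R) : 'cV[R]_2 :=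
  \col_(i < 2) if (i == 0 :> nat) then a else b.

Definition enorm (v : 'cV[R]_2) : R := Num.sqrt (v 0 0 ^+ 2 + v 1 0 ^+ 2).

Definition hatPsi (K : R -> Prop) (v : 'cV[R]_2) : Prop :=
  exists m t, K m /\ v = t *: vec2 m 1.

Definition cone_invariant (A : 'M[R]_2) (C : 'cV[R]_2 -> Prop) : Prop :=
  forall v, C v -> C (A *m v).

Definition cone_expanding (A : 'M[R]_2) (C : 'cV[R]_2 -> Prop) (c : R) : Prop :=
  1 < c /\ forall v, C v -> c * enorm v <= enorm (A *m v).

End Defs.

(* Main.v *)
Set Warnings "-all".
Require Import Defs.
From HB Require Import structures.
From mathcomp Require Import all_boot all_order all_algebra.
From mathcomp Require Import ring lra.
Import Order.TTheory GRing.Theory Num.Theory.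
Local Open Scope ring_scope.

Section H.
Variable R : rcfType.

Lemma eig_facts (tau delta : R) : tau > delta + 1 -> delta > 0 ->
  let s := lambda_s tau delta in let u := lambda_u tau delta in
  [/\ 0 < s, s < 1, 1 < u, s * u = delta & s + u = tau].
Proof.
move=> ht hd s u.
set r := Num.sqrt (tau ^+ 2 - 4 * delta).
have hpos : 0 <= tau ^+ 2 - 4 * delta.
  have h1 : (delta + 1) ^+ 2 <= tau ^+ 2 by rewrite ler_sqr ?nnegrE; lra.
  have h2 : 0 <= (delta - 1) ^+ 2 by apply: sqr_ge0.
  lra.
have r0 : 0 <= r by rewrite sqrtr_ge0.
have r2 : r ^+ 2 = tau ^+ 2 - 4 * delta by rewrite sqr_sqrtr.
have -> : s = (tau - r) / 2 by [].
have -> : u = (tau + r) / 2 by [].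
split.
- have : r < tau.
    rewrite -ltr_sqr ?nnegrE; try lra.
  move=> h; lra.
- have : tau - 2 < r.
    case: (ltrP tau 2) => h; first lra.
    rewrite -ltr_sqr ?nnegrE; lra.
  move=> h; lra.
- have : 2 - tau < r.
    case: (ltrP 2 tau) => h; first lra.
    rewrite -ltr_sqr ?nnegrE; lra.
  move=> h; lra.
- have -> : (tau - r) / 2 * ((tau + r) / 2) = (tau ^+ 2 - r ^+ 2) / 4 by field.
  by rewrite r2; field.
- by field.
Qed.

Lemma key1 (s u p c2 : R) : 0 < s -> s < 1 -> 1 < u -> 1 <= s ^+ 2 + 2 * s ->
  0 <= c2 -> c2 * s ^+ 2 <= 1 -> -1 <= p -> p <= u ->
  c2 * s ^+ 2 * (p ^+ 2 + u ^+ 2) <= (s * (p + 1) + u) ^+ 2 + 1.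
Proof.
move=> s0 s1 u1 hs c0 hc p1 pu.
have h0 : 0 <= p ^+ 2 + u ^+ 2 by rewrite addr_ge0 ?sqr_ge0.
have h1 : c2 * s ^+ 2 * (p ^+ 2 + u ^+ 2) <= p ^+ 2 + u ^+ 2.
  by rewrite ler_piMl // mulr_ge0 // sqr_ge0.
set g := fun x : R => x ^+ 2 - s ^+ 2 * (x + 1) ^+ 2 - 2 * s * u * (x + 1) - 1.
have gu : g u <= 0.
  rewrite /g.
  have e : u ^+ 2 - s ^+ 2 * (u + 1) ^+ 2 - 2 * s * u * (u + 1) - 1 =
    u ^+ 2 * (1 - (s ^+ 2 + 2 * s)) - (2 * s ^+ 2 * u + s ^+ 2 + 2 * s * u + 1) by ring.
  rewrite e.
  have : 0 <= u ^+ 2 * ((s ^+ 2 + 2 * s) - 1) by rewrite mulr_ge0 ?sqr_ge0 ?subr_ge0.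
  have : 0 <= 2 * s ^+ 2 * u + s ^+ 2 + 2 * s * u + 1 by nra.
  lra.
have id : (u + 1) * g p = - ((u + 1) * (1 - s ^+ 2) * ((p + 1) * (u - p))) + g u * (p + 1).
  by rewrite /g; ring.
have A : 0 <= (u + 1) * (1 - s ^+ 2) * ((p + 1) * (u - p)).
  rewrite !mulr_ge0 //; try lra. nra.
have B : g u * (p + 1) <= 0 by rewrite mulr_le0_ge0 //; lra.
have gp : g p <= 0.
  have : (u + 1) * g p <= 0 by rewrite id; lra.
  by rewrite pmulr_rle0 //; lra.
move: gp; rewrite /g => gp.
have : p ^+ 2 + u ^+ 2 <= (s * (p + 1) + u) ^+ 2 + 1.
  have e : (s * (p + 1) + u) ^+ 2 + 1 - (p ^+ 2 + u ^+ 2) =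
     - (p ^+ 2 - s ^+ 2 * (p + 1) ^+ 2 - 2 * s * u * (p + 1) - 1) by ring.
  rewrite -subr_ge0 e; lra.
lra.
Qed.

Lemma key2 (s u p c2 : R) : 0 < s -> s < 1 -> 1 < u -> s ^+ 2 + 2 * s < 1 ->
  0 <= c2 -> 2 * (c2 * s ^+ 2) <= (1 + s) ^+ 2 -> -1 <= p -> p <= u ->
  c2 * s ^+ 2 * (p ^+ 2 + u ^+ 2) <= (s * (p + 1) + u) ^+ 2 + 1.
Proof.
move=> s0 s1 u1 hs c0 hc p1 pu.
have h0 : 0 <= p ^+ 2 + u ^+ 2 by rewrite addr_ge0 ?sqr_ge0.
have h1 : 2 * (c2 * s ^+ 2 * (p ^+ 2 + u ^+ 2)) <= (1 + s) ^+ 2 * (p ^+ 2 + u ^+ 2).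
  by rewrite mulrA ler_wpM2r.
set h := fun x : R => (1 + s) ^+ 2 * (x ^+ 2 + u ^+ 2) - 2 * ((s * (x + 1) + u) ^+ 2 + 1).
have hu : h u <= 0.
  rewrite /h.
  have e : (1 + s) ^+ 2 * (u ^+ 2 + u ^+ 2) - 2 * ((s * (u + 1) + u) ^+ 2 + 1) =
     - (2 * (2 * s * u * (1 + s) + s ^+ 2 + 1)) by ring.
  rewrite e.
  have : 0 <= 2 * s * u * (1 + s) + s ^+ 2 + 1.
    rewrite addr_ge0 ?sqr_ge0 // addr_ge0 ?sqr_ge0 // !mulr_ge0 //; lra.
  lra.
have hm : h (-1) <= 0.
  rewrite /h.
  have e : (1 + s) ^+ 2 * ((-1) ^+ 2 + u ^+ 2) - 2 * ((s * (-1 + 1) + u) ^+ 2 + 1) =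
     - ((1 + u ^+ 2) * (1 - (s ^+ 2 + 2 * s))) by ring.
  rewrite e.
  have : 0 <= (1 + u ^+ 2) * (1 - (s ^+ 2 + 2 * s)).
    rewrite mulr_ge0 //; last lra. by rewrite addr_ge0 ?sqr_ge0.
  lra.
have id : (u + 1) * h p = - ((u + 1) * ((1 + s) ^+ 2 - 2 * s ^+ 2) * ((p + 1) * (u - p)))
   + h (-1) * (u - p) + h u * (p + 1).
  by rewrite /h; ring.
have A : 0 <= (u + 1) * ((1 + s) ^+ 2 - 2 * s ^+ 2) * ((p + 1) * (u - p)).
  rewrite !mulr_ge0 //; try lra.
have B : h u * (p + 1) <= 0 by rewrite mulr_le0_ge0 //; lra.
have C : h (-1) * (u - p) <= 0 by rewrite mulr_le0_ge0 //; lra.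
have hp : h p <= 0.
  have : (u + 1) * h p <= 0 by rewrite id; lra.
  by rewrite pmulr_rle0 //; lra.
move: hp; rewrite /h => hp.
lra.
Qed.

Definition Binv (tau delta : R) : 'M[R]_2 :=
  \matrix_(i < 2, j < 2)
    if (i == 0 :> nat) then (if (j == 0 :> nat) then 0 else - (1 / delta))
    else (if (j == 0 :> nat) then 1 else tau / delta).

Lemma AL_Binv (tau delta : R) : delta != 0 -> AL tau delta *m Binv tau delta = 1%:M.
Proof.
move=> hd; apply/matrixP => i j; rewrite !mxE !big_ord_recr !big_ord0 /= !mxE.
case: i => [[|[|i]] Hi] //; case: j => [[|[|j]] Hj] //=; rewrite ?mxE /=;
  try field; by [].
Qed.

Lemma invAL (tau delta : R) : delta != 0 -> invmx (AL tau delta) = Binv tau delta.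
Proof.
move=> hd; have e := @AL_Binv tau delta hd.
have [uA _] := mulmx1_unit e.
by rewrite -[invmx _]mulmx1 -e mulmxA mulVmx // mul1mx.
Qed.

Lemma Binv_vec2 (tau delta a b : R) :
  Binv tau delta *m vec2 a b = vec2 (- (b / delta)) (a + tau / delta * b).
Proof.
apply/matrixP => i j; rewrite !mxE !big_ord_recr !big_ord0 /= !mxE.
case: i => [[|[|i]] Hi] //=; rewrite ?mxE /=; ring.
Qed.

Lemma vec2_0 (a b : R) : vec2 a b 0 0 = a. Proof. by rewrite mxE. Qed.
Lemma vec2_1 (a b : R) : vec2 a b 1 0 = b. Proof. by rewrite mxE. Qed.
End H.

Theorem lemma6p1 (R : rcfType) (tau delta mmax : R) :
  tau > delta + 1 -> delta > 0 -> 0 <= mmax <= 1 ->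
  let ls := lambda_s tau delta in
  let lu := lambda_u tau delta in
  let K := fun m : R => - (1 / lu) <= m <= mmax in
  let c := Num.min (1 / ls) ((1 + ls) / (Num.sqrt 2 * ls)) in
  cone_invariant (invmx (AL tau delta)) (hatPsi K) /\
  cone_expanding (invmx (AL tau delta)) (hatPsi K) c.
Proof.
move=> ht hd /andP[hm0 hm1] ls lu K c.
have [s0 s1 u1 su spu] := @eig_facts R _ _ ht hd.
rewrite -/ls -/lu in s0 s1 u1 su spu.
have hd0 : delta != 0 by rewrite gt_eqF.
rewrite invAL //.
split.
- move=> v [m [t [/andP[Km1 Km2] ->]]].
  rewrite -scalemxAr Binv_vec2.
  have p1 : -1 <= lu * m.
    have : 0 <= lu * (m + 1 / lu) by rewrite mulr_ge0 //; lra.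
    have -> : lu * (m + 1 / lu) = lu * m + 1 by field; lra.
    lra.
  have hpos : lu <= delta * m + tau.
    have : - ls <= delta * m.
      rewrite -su -mulrA. nra.
    lra.
  have xp : 0 < delta * m + tau by lra.
  have hx : delta * m + tau != 0 by rewrite gt_eqF.
  exists (- (1 / (delta * m + tau))), (t * (m + tau / delta)); split.
    apply/andP; split.
      rewrite lerN2.
      have e : 1 / lu - 1 / (delta * m + tau) = (delta * m + tau - lu) / (lu * (delta * m + tau)).
        field; rewrite ?hx ?andbT; lra.
      have : 0 <= (delta * m + tau - lu) / (lu * (delta * m + tau)).
        rewrite divr_ge0 //; [lra | rewrite mulr_ge0 //; lra].
      rewrite -e; lra.
    have : 0 <= 1 / (delta * m + tau) by rewrite divr_ge0 //; lra.
    lra.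
  apply/matrixP => i j; rewrite !mxE.
  case: i => [[|[|i]] Hi] //=; field; rewrite ?hx ?hd0 //.
- set q := Num.sqrt (2 : R).
  have q0 : 0 < q by rewrite sqrtr_gt0; lra.
  have q2 : q ^+ 2 = 2 by rewrite sqr_sqrtr //; lra.
  have q2' : q < 2.
    rewrite -ltr_sqr ?nnegrE; lra.
  have ca : c <= 1 / ls by rewrite /c ge_min lexx.
  have cb : c <= (1 + ls) / (q * ls) by rewrite /c ge_min lexx orbT.
  have c1 : 1 < c.
    rewrite /c lt_min; apply/andP; split.
      by rewrite ltr_pdivlMr // mul1r.
      rewrite -/q ltr_pdivlMr; last by rewrite mulr_gt0.
    rewrite mul1r.
    have : 0 < (2 - q) * ls by rewrite mulr_gt0 //; lra.
    lra.
  have c0 : 0 <= c by lra.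
  split => // v [m [t [/andP[Km1 Km2] ->]]].
  rewrite -scalemxAr Binv_vec2.
  rewrite /enorm !mxE /=.
  rewrite -ler_sqr ?nnegrE; [| by rewrite mulr_ge0 ?sqrtr_ge0 | by rewrite sqrtr_ge0].
  rewrite exprMn !sqr_sqrtr ?addr_ge0 ?sqr_ge0 //.
  rewrite -su -spu.
  have p1 : -1 <= lu * m.
    have : 0 <= lu * (m + 1 / lu) by rewrite mulr_ge0 //; lra.
    have -> : lu * (m + 1 / lu) = lu * m + 1 by field; lra.
    lra.
  have pu : lu * m <= lu by rewrite ler_piMr //; lra.
  have KEY : c ^+ 2 * ls ^+ 2 * ((lu * m) ^+ 2 + lu ^+ 2) <=
             (ls * (lu * m + 1) + lu) ^+ 2 + 1.
    case: (lerP 1 (ls ^+ 2 + 2 * ls)) => hs.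
      apply: (@key1 R) => //; first exact: sqr_ge0.
      have : c * ls <= 1 by move: ca; rewrite ler_pdivlMr.
      have : 0 <= c * ls by rewrite mulr_ge0 //; lra.
      rewrite -exprMn. nra.
    apply: (@key2 R) => //; first exact: sqr_ge0.
    have : c * (q * ls) <= 1 + ls.
      move: cb; rewrite ler_pdivlMr //; first by rewrite mulr_gt0.
    have : 0 <= c * (q * ls) by rewrite mulr_ge0 // mulr_ge0 //; lra.
    have -> : 2 * (c ^+ 2 * ls ^+ 2) = (c * (q * ls)) ^+ 2 by rewrite !exprMn q2; ring.
    nra.
  have ls0 : ls != 0 by rewrite gt_eqF.
  have lu0 : lu != 0 by rewrite gt_eqF //; lra.
  have F : (t * - (1 / (ls * lu))) ^+ 2 + (t * (m + (ls + lu) / (ls * lu) * 1)) ^+ 2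
       - c ^+ 2 * ((t * m) ^+ 2 + (t * 1) ^+ 2) =
       (t / (ls * lu)) ^+ 2 * ((ls * (lu * m + 1) + lu) ^+ 2 + 1
          - c ^+ 2 * ls ^+ 2 * ((lu * m) ^+ 2 + lu ^+ 2)).
    by field; rewrite ls0 lu0.
  have : 0 <= (t / (ls * lu)) ^+ 2 * ((ls * (lu * m + 1) + lu) ^+ 2 + 1
          - c ^+ 2 * ls ^+ 2 * ((lu * m) ^+ 2 + lu ^+ 2)).
    by rewrite mulr_ge0 ?sqr_ge0 // subr_ge0.
  rewrite -F subr_ge0 => //.
Qed.
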